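(* A strongly regular graph with parameters $(76,30,8,14)$ does not contain $K_5-e$ as an induced subgraph, where $K_5-e$ is the graph on $5$ vertices obtained from $K_5$ by deleting one edge.
   Context: A graph is strongly regular with parameters $(v,k,\lambda,\mu)$ if it has $v$ vertices, is $k$-regular, adjacent vertices have exactly $\lambda$ common neighbours and distinct non-adjacent vertices have exactly $\mu$ common neighbours. *)

(* Defs.v *)
From mathcomp Require Import all_boot.
Set Implicit Arguments. Unset Strict Implicit. Unset Printing Implicit Defensive.

Definition simple_graph (T : finType) (e : rel T) : Prop :=
  symmetric e /\ irreflexive e.

Definition srg (T : finType) (e : rel T) (v k lam mu : nat) : Prop :=
  [/\ simple_graph e,
      #|T| = v,
      (forall x : T, #|[set y | e x y]| = k),
      (forall x y : T, e x y -> #|[set z | e x z && e y z]| = lam)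
    & (forall x y : T, x != y -> ~~ e x y -> #|[set z | e x z && e y z]| = mu)].

Definition K5_minus_e (i j : 'I_5) : bool :=
  (i != j) && ~~ ((val i == 0) && (val j == 1) || (val i == 1) && (val j == 0)).

Definition induced_subgraph (S T : finType) (h : rel S) (e : rel T) : Prop :=
  exists f : S -> T, injective f /\ forall i j, e (f i) (f j) = h i j.

(* Main.v *)
Require Import Defs.
From mathcomp Require Import all_boot.
From mathcomp Require Import zify.

Set Implicit Arguments. Unset Strict Implicit. Unset Printing Implicit Defensive.

Lemma sumb (T : finType) (P : pred T) : \sum_x (P x : nat) = #|[set x | P x]|.
Proof.
rewrite -sum1_card [RHS]big_mkcond /=; apply: eq_bigr => x _; rewrite inE.
by case: (P x).
Qed.

Lemma sumb2 (T : finType) (P Q : pred T) :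
  \sum_x ((P x : nat) * Q x) = #|[set x | P x && Q x]|.
Proof.
rewrite -sumb; apply: eq_bigr => x _; by case: (P x); case: (Q x).
Qed.

Definition gB (p q r s t : bool) : nat :=
  let al := (p + q)%N in let be := (r + s + t)%N in
  if be == 0 then 2 - al else (be - 1) * (be + al - 2).

Lemma gB_id p q r s t :
  (gB p q r s t + p + q + 3 * (r + s + t)
   = 2 + (p*r + p*s + p*t + q*r + q*s + q*t) + (r + s + t) + 2 * (r*s + r*t + s*t))%N.
Proof. by case: p; case: q; case: r; case: s; case: t. Qed.

Theorem mainTheorem9 (T : finType) (e : rel T) :
  srg e 76 30 8 14 -> ~ induced_subgraph K5_minus_e e.
Proof.
case=> [[esym eirr] HT Hdeg Hlam _] [f [finj Hf]].
pose i0 := @Ordinal 5 0 erefl. pose i1 := @Ordinal 5 1 erefl.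
pose i2 := @Ordinal 5 2 erefl. pose i3 := @Ordinal 5 3 erefl.
pose i4 := @Ordinal 5 4 erefl.
set a := f i0; set b := f i1; set c := f i2; set d := f i3; set w := f i4.
pose g x := gB (e a x) (e b x) (e c x) (e d x) (e w x).
have L : forall u v, e u v -> \sum_x ((e u x : nat) * e v x) = 8.
  by move=> u v uv; rewrite sumb2 Hlam.
have D : forall u, \sum_x (e u x : nat) = 30 by move=> u; rewrite sumb Hdeg.
have E : forall i j, e (f i) (f j) = K5_minus_e i j by [].
have Hsum : (\sum_x g x + 60 + 270 = 2 * 76 + 48 + 90 + 48)%N.
  have H : \sum_x (g x + e a x + e b x + 3 * (e c x + e d x + e w x))%N =
    \sum_x (2 + (e a x * e c x + e a x * e d x + e a x * e w x + e b x * e c x +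
     e b x * e d x + e b x * e w x) + (e c x + e d x + e w x) +
     2 * (e c x * e d x + e c x * e w x + e d x * e w x))%N.
    by apply: eq_bigr => x _; apply: gB_id.
  rewrite !big_split /= -?big_distrr /= in H.
  idtac.
  rewrite !D !L ?E // sum_nat_const cardT -cardE HT /= in H.
  rewrite sum_nat_const cardT -cardE HT in H. move: H; rewrite /=; lia.
have Hg : forall i, g (f i) = 2.
  by move=> i; rewrite /g !E; case: i => [[|[|[|[|[|?]]]]] ?].
have : (\sum_(i < 5) g (f i) <= \sum_x g x)%N.
  rewrite -(big_imset (fun x => g x) (in2W finj)) /=.
  rewrite [leqRHS](bigID (fun x => x \in f @: (xpredT : pred 'I_5))) /=.
  exact: leq_addr.
rewrite (eq_bigr (fun _ => 2) (fun i _ => Hg i)) sum_nat_const card_ord /=.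
move: Hsum; lia.
Qed.
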